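(* Let $m,K$ be positive integers, and for $\ell\in\{1,\dots,K\}$ let $\mathbf B_\ell$ be a real $m\times s_\ell$ matrix. Let $\alpha\in\mathbb R$ and let $\boldsymbol\Sigma$ be any $m\times m$ symmetric nonnegative definite matrix such that $\mathrm{tr}(\mathbf B_\ell'\boldsymbol\Sigma\mathbf B_\ell)\le\alpha$ for all $\ell\in\{1,\dots,K\}$. Let $\mathbf w=(w_1,\dots,w_K)'\in\mathbb R^K$ have nonnegative components summing to $1$, and let $\mathbf N(\mathbf w)=\sum_{\ell=1}^K w_\ell\mathbf B_\ell\mathbf B_\ell'$. Let $\mathbf X$ be a real $m\times r$ matrix with $\mathcal C(\mathbf X)\subseteq\mathcal C(\mathbf N(\mathbf w))$. Then $$\mathrm{tr}(\mathbf X'\boldsymbol\Sigma\mathbf X)\le \alpha\,\lambda_{\max}\big(\mathbf X'\mathbf N^+(\mathbf w)\mathbf X\big).$$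
   Context: $\mathcal C(\cdot)$ denotes the column space of a matrix, $\mathbf A^+$ the Moore–Penrose pseudoinverse, $\mathbf A'$ the transpose, and $\lambda_{\max}$ the largest eigenvalue of a symmetric matrix. *)

(* Defs.v *)
From HB Require Import structures.
From mathcomp Require Import all_boot all_order all_algebra.
From mathcomp Require Export all_boot all_order all_algebra.
From mathcomp Require Export reals.
Set Implicit Arguments. Unset Strict Implicit. Unset Printing Implicit Defensive.
Import Order.TTheory GRing.Theory Num.Theory.
Local Open Scope ring_scope.

Definition nnd (R : realType) (m : nat) (S : 'M[R]_m) : Prop :=
  S^T = S /\ forall v : 'cV[R]_m, 0 <= (v^T *m S *m v) 0 0.

Definition is_pinv (R : realType) (m n : nat) (A : 'M[R]_(m, n)) (P : 'M[R]_(n, m)) : Prop :=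
  [/\ A *m P *m A = A, P *m A *m P = P,
      (A *m P)^T = A *m P & (P *m A)^T = P *m A].

Definition colspace_sub (R : realType) (m p q : nat) (X : 'M[R]_(m, p)) (Y : 'M[R]_(m, q)) : bool :=
  (X^T <= Y^T)%MS.

Definition is_lambda_max (R : realType) (n : nat) (A : 'M[R]_n) (lam : R) : Prop :=
  eigenvalue A lam /\ forall mu, eigenvalue A mu -> mu <= lam.

Definition Nw (R : realType) (m K : nat) (s : 'I_K -> nat)
  (B : forall l : 'I_K, 'M[R]_(m, s l)) (w : 'I_K -> R) : 'M[R]_m :=
  \sum_(l < K) w l *: (B l *m (B l)^T).

(* Main.v *)
Require Import Defs.
From mathcomp Require Import all_boot all_order all_algebra reals.
From mathcomp Require Import sesquilinear spectral complex.
From mathcomp Require Import ring lra.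
Import Order.TTheory GRing.Theory Num.Theory Num.Def.
Set Implicit Arguments. Unset Strict Implicit. Unset Printing Implicit Defensive.
Local Open Scope ring_scope.
Local Open Scope sesquilinear_scope.

Lemma mxB (R : pzRingType) m n (A B : 'M[R]_(m,n)) i j : (A - B) i j = A i j - B i j.
Proof. by rewrite !mxE. Qed.
Lemma mxZ (R : pzRingType) m n (a : R) (A : 'M[R]_(m,n)) i j : (a *: A) i j = a * A i j.
Proof. by rewrite !mxE. Qed.

Lemma trB (R : pzRingType) m n (A B : 'M[R]_(m,n)) : (A - B)^T = A^T - B^T.
Proof. by apply/matrixP => i j; rewrite !mxE. Qed.

Lemma tr11 (T : Type) (M : 'M[T]_1) : M^T = M.
Proof. by apply/matrixP => i j; rewrite !ord1 mxE. Qed.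

Section Key.
Variable R : rcfType.
Local Notation C := (R[i]).
Local Notation f := (real_complex R).

Lemma fR_real (x : R) : f x \is Num.real.
Proof. by rewrite /real_complex_def complex_real. Qed.

Lemma conj_f (x : R) : conjC (f x) = f x.
Proof. exact: conj_Creal (fR_real x). Qed.

Lemma map_tc m n (A : 'M[R]_(m,n)) : (map_mx f A)^t* = map_mx f A^T.
Proof. by apply/matrixP => i j; rewrite !mxE conj_f. Qed.

Lemma le0f (x : R) : (0 <= f x) = (0 <= x).
Proof. exact: ler0c. Qed.

Lemma lef (x y : R) : (f x <= f y) = (x <= y).
Proof. exact: lecR. Qed.

Lemma cquad n (T : 'M[R]_n) (p : 'rV[C]_n) : T^T = T ->
  (forall v : 'cV_n, 0 <= (v^T *m T *m v) 0 0) -> 0 <= (p *m map_mx f T *m p^t*) 0 0.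
Proof.
move=> Ts Tp.
pose a := map_mx (@complex.Re R) p; pose b := map_mx (@complex.Im R) p.
have hp : p = map_mx f a + 'i *: map_mx f b.
  by apply/matrixP => i j; rewrite !mxE {1}[p i j]complexE complexiE.
have hpc : p^t* = (map_mx f a)^t* - 'i *: (map_mx f b)^t*.
  apply/matrixP => i j; rewrite hp !mxE rmorphD rmorphM /= conjCi !conj_f.
  by rewrite mulNr.
rewrite hpc {1}hp !map_tc.
rewrite !mulmxDl !mulmxBr -!scalemxAl -!scalemxAr -!map_mxM.
have e : b *m T *m a^T = a *m T *m b^T.
  have t : (b *m T *m a^T)^T = a *m T *m b^T by rewrite !trmx_mul trmxK Ts mulmxA.
  by apply/matrixP => i j; rewrite !ord1 -t [RHS]mxE.
rewrite e.
have h1 : 0 <= (a *m T *m a^T) 0 0 by have := Tp a^T; rewrite trmxK.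
have h2 : 0 <= (b *m T *m b^T) 0 0 by have := Tp b^T; rewrite trmxK.
move: h1 h2; move: (a *m T *m a^T) (a *m T *m b^T) (b *m T *m b^T) => x y z hx hz.
rewrite !mxE.
have -> : forall u v w : C, u - 'i * v + ('i * v - 'i * ('i * w)) = u + w.
  move=> u v w; rewrite mulrA -expr2 sqrCi; ring.
by rewrite -rmorphD le0f addr_ge0.
Qed.
Lemma trace_psd n (S T : 'M[R]_n) : S^T = S ->
  (forall mu, eigenvalue S mu -> 0 <= mu) -> T^T = T ->
  (forall v : 'cV_n, 0 <= (v^T *m T *m v) 0 0) -> 0 <= \tr (S *m T).
Proof.
move=> Ss Se Ts Tp.
set Sc := map_mx f S.
have Sh : Sc \is hermsymmx.
  by apply/is_hermitianmxP; rewrite expr0 scale1r map_tc Ss.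
have /orthomx_spectralP E := hermitian_normalmx Sh.
have Pu : spectralmx Sc \is unitarymx := spectral_unitarymx Sc.
have dreal := hermitian_spectral_diag_real Sh.
move: E dreal Pu; set P := spectralmx Sc; set d := spectral_diag Sc.
move=> E dreal Pu; clearbody P d; rewrite invmx_unitary // in E.
have PP : P *m P^t* = 1%:M by apply/unitarymxP.
have dpos : forall k, 0 <= d 0 k.
  move=> k; have dr : d 0 k \is Num.real by move/mxOverP: dreal; apply.
  rewrite -(RRe_real dr) ler0c.
  apply: Se; rewrite -(@eigenvalue_map _ _ (real_complex R)).
  apply/eigenvalueP; exists (row k P).
    rewrite -row_mul -/Sc E !mulmxA PP mul1mx row_mul row_diag_mx.
    by rewrite -scalemxAl rowE; congr (_ *: _); exact/esym/(RRe_real dr).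
  apply/eqP => r0; have := congr1 (fun M => (M *m P^t*) 0 k) r0.
  by rewrite -row_mul PP mul0mx !mxE eqxx /=; move/eqP; rewrite oner_eq0.
suff: 0 <= f (\tr (S *m T)) by rewrite le0f.
rewrite -trace_map_mx map_mxM -/Sc E -!mulmxA mxtrace_mulC -!mulmxA.
rewrite mul_diag_mx /mxtrace; apply: sumr_ge0 => k _; rewrite mxE.
apply: mulr_ge0 => //.
have := cquad (row k P) Ts Tp.
suff -> : (row k P *m map_mx f T *m (row k P)^t*) 0 0 = (P *m (map_mx f T *m P^t*)) k k by [].
rewrite mulmxA !mxE; apply: eq_bigr => j _; rewrite !mxE.
by congr (_ * _); apply: eq_bigr => i _; rewrite !mxE.
Qed.
Lemma xxT_ge0 n (x : 'rV[R]_n) : 0 <= (x *m x^T) 0 0.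
Proof.
by rewrite mxE; apply: sumr_ge0 => j _; rewrite mxE -expr2 sqr_ge0.
Qed.

Lemma xxT_gt0 n (x : 'rV[R]_n) : x != 0 -> 0 < (x *m x^T) 0 0.
Proof.
move=> xn0; rewrite lt_def xxT_ge0 andbT; apply: contra xn0 => /eqP h.
apply/eqP/rowP => j; rewrite mxE in h.
have hp : forall i, predT i -> 0 <= x 0 i * x^T i 0.
  by move=> i _; rewrite mxE -expr2 sqr_ge0.
have := psumr_eq0P hp h (isT : predT j).
rewrite mxE => /eqP; rewrite mulf_eq0 orbb => /eqP xj.
by rewrite [RHS]mxE.
Qed.

Lemma eig_nonneg n (S : 'M[R]_n) mu :
  (forall v : 'cV_n, 0 <= (v^T *m S *m v) 0 0) -> eigenvalue S mu -> 0 <= mu.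
Proof.
move=> Sp /eigenvalueP [v hv vn0].
have := Sp v^T; rewrite trmxK hv -scalemxAl mxE.
by rewrite pmulr_lge0 // xxT_gt0.
Qed.

Lemma rayleigh n (M : 'M[R]_n) lam : M^T = M ->
  (forall mu, eigenvalue M mu -> mu <= lam) ->
  forall u : 'cV_n, (u^T *m M *m u) 0 0 <= lam * (u^T *m u) 0 0.
Proof.
move=> Ms Me u.
have := @trace_psd n (lam%:M - M) (u *m u^T).
have tr1 : forall A : 'M[R]_n, \tr (A *m (u *m u^T)) = (u^T *m A *m u) 0 0.
  move=> A; rewrite mulmxA mxtrace_mulC mulmxA /mxtrace big_ord1.
  by [].
rewrite mulmxBl [\tr (_ - _)]raddfB /= tr1 tr1 mul_mx_scalar -scalemxAl mxE subr_ge0; apply.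
- by rewrite linearB /= tr_scalar_mx Ms.
- move=> mu /eigenvalueP [v hv vn0].
  have : eigenvalue M (lam - mu).
    apply/eigenvalueP; exists v => //.
    move: hv; rewrite mulmxBr mul_mx_scalar scalerBl => /eqP.
    by rewrite subr_eq => /eqP ->; rewrite addrAC subrr add0r.
  by move/Me; rewrite gerBl.
- by rewrite trmx_mul trmxK.
- move=> v; rewrite mulmxA -mulmxA -[u^T *m v]trmxK trmx_mul trmxK.
  exact: xxT_ge0.
Qed.

Lemma cs_real (q s lam : R) : 0 <= lam -> 0 <= s -> 0 <= q ->
  (forall c, 0 <= q - 2 * c * s + c ^+ 2 * lam * s) -> s <= lam * q.
Proof.
move=> l0 s0 q0 H.
have [lp|] := ltP 0 lam; last first.
  move=> ll; have l00 : lam = 0 by apply/eqP; rewrite eq_le ll l0.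
  subst lam; rewrite mul0r; apply: contraTT (H ((q + 1) / s)).
  rewrite -ltNge => sp; rewrite -ltNge.
  have hc : (q + 1) / s * s = q + 1 by rewrite divfK // gt_eqF.
  rewrite mulr0 mul0r addr0 -mulrA hc; lra.
have := H lam^-1.
have li : lam * lam^-1 = 1 by rewrite divff // gt_eqF.
move=> h; have := mulr_ge0 (ltW lp) h.
have -> : lam * (q - 2 * lam^-1 * s + lam^-1 ^+ 2 * lam * s)
  = lam * q - 2 * (lam * lam^-1) * s + (lam * lam^-1) ^+ 2 * s by ring.
rewrite li; lra.
Qed.
Lemma quad_sq n k (A : 'M[R]_(n,k)) (v : 'cV_n) :
  v^T *m (A *m A^T) *m v = (v^T *m A) *m (v^T *m A)^T.
Proof. by rewrite trmx_mul trmxK !mulmxA. Qed.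
Lemma trZ m n (a : R) (A : 'M[R]_(m,n)) : (a *: A)^T = a *: A^T.
Proof. by apply/matrixP => i j; rewrite !mxE. Qed.
End Key.

Local Close Scope sesquilinear_scope.

Theorem lemma1 (R : realType) (m K : nat) (hm : (0 < m)%N) (hK : (0 < K)%N)
  (s : 'I_K -> nat) (B : forall l : 'I_K, 'M[R]_(m, s l))
  (alpha : R) (Sigma : 'M[R]_m)
  (hS : nnd Sigma)
  (htr : forall l : 'I_K, \tr ((B l)^T *m Sigma *m B l) <= alpha)
  (w : 'I_K -> R) (hw0 : forall l, 0 <= w l) (hw1 : \sum_(l < K) w l = 1)
  (r : nat) (X : 'M[R]_(m, r))
  (hX : colspace_sub X (Nw B w))
  (Np : 'M[R]_m) (hNp : is_pinv (Nw B w) Np)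
  (lam : R) (hlam : is_lambda_max (X^T *m Np *m X) lam) :
  \tr (X^T *m Sigma *m X) <= alpha * lam.
Proof.
move: hX hNp; set N := Nw B w => hX hNp.
have Ns : N^T = N.
  rewrite /N /Nw raddf_sum; apply: eq_bigr => l _.
  by change ((w l *: (B l *m (B l)^T))^T = w l *: (B l *m (B l)^T)); rewrite trZ trmx_mul trmxK.
have NP : forall v : 'cV_m, 0 <= (v^T *m N *m v) 0 0.
  move=> v; rewrite /N /Nw mulmx_sumr mulmx_suml summxE; apply: sumr_ge0 => l _.
  rewrite -scalemxAr -scalemxAl mxE mulr_ge0 // quad_sq; exact: xxT_ge0.
case/submxP: hX => D hD; rewrite Ns in hD.
set Y := D^T.
have hXe : X = N *m Y by rewrite -[X]trmxK hD trmx_mul Ns.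
case: hNp => P1 _ _ _.
case: hlam; set M := X^T *m Np *m X => hl1 hl2.
have hM : M = Y^T *m N *m Y.
  rewrite /M hXe trmx_mul Ns !mulmxA -(mulmxA _ N Np) -(mulmxA _ (N *m Np) N).
  by rewrite P1.
have Ms : M^T = M by rewrite hM !trmx_mul trmxK Ns mulmxA.
have MP : forall v : 'cV_r, 0 <= (v^T *m M *m v) 0 0.
  by move=> v; rewrite hM; have := NP (Y *m v); rewrite trmx_mul !mulmxA.
have lam0 : 0 <= lam := eig_nonneg MP hl1.
have Ray := rayleigh Ms hl2.
have TP : forall v : 'cV_m, 0 <= (v^T *m (lam *: N - X *m X^T) *m v) 0 0.
  move=> v; rewrite mulmxBr mulmxBl mxB subr_ge0 -scalemxAr -scalemxAl mxZ.
  rewrite quad_sq.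
  set u := (v^T *m X)^T.
  have hu : u = Y^T *m N *m v by rewrite /u hXe trmx_mul trmxK trmx_mul Ns.
  rewrite -[v^T *m X]trmxK -/u.
  apply: cs_real; [exact: lam0 | by have := xxT_ge0 u^T; rewrite trmxK | exact: NP | ].
  move=> c; have := NP (v - c *: (Y *m u)).
  rewrite trB trZ !mulmxBl !mulmxBr -!scalemxAl -!scalemxAr.
  have e1 : (Y *m u)^T *m N *m v = u^T *m u by rewrite trmx_mul -!mulmxA (mulmxA Y^T) -hu.
  have e2 : v^T *m N *m (Y *m u) = u^T *m u.
    by rewrite -e1 -[LHS]tr11 !trmx_mul !trmxK Ns !mulmxA.
  have e3 : (Y *m u)^T *m N *m (Y *m u) = u^T *m M *m u.
    by rewrite hM trmx_mul !mulmxA.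
  rewrite e1 e2 e3.
  have := Ray u; move: (u^T *m M *m u) (u^T *m u) (v^T *m N *m v) => a b d ha.
  rewrite !mxE => h.
  have c2 : 0 <= c ^+ 2 by rewrite sqr_ge0.
  have := ler_wpM2l c2 ha. nra.
have Ss : Sigma^T = Sigma by case: hS.
have Se : forall mu, eigenvalue Sigma mu -> 0 <= mu.
  by move=> mu; apply: eig_nonneg; case: hS.
have Ts : (lam *: N - X *m X^T)^T = lam *: N - X *m X^T.
  by rewrite trB trZ Ns trmx_mul trmxK.
have := trace_psd Ss Se Ts TP.
rewrite mulmxBr [\tr (_ - _)]raddfB /= -scalemxAr mxtraceZ subr_ge0 => H.
have e1 : \tr (X^T *m Sigma *m X) = \tr (Sigma *m (X *m X^T)).
  by rewrite [in RHS]mulmxA [in RHS]mxtrace_mulC mulmxA.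
have tN : \tr (Sigma *m N) <= alpha.
  rewrite /N /Nw mulmx_sumr raddf_sum /=.
  apply: le_trans (_ : \sum_(l < K) w l * alpha <= alpha).
    apply: ler_sum => l _; rewrite -scalemxAr mxtraceZ ler_wpM2l //.
    by rewrite mulmxA mxtrace_mulC mulmxA.
  by rewrite -mulr_suml hw1 mul1r.
rewrite e1; apply: le_trans H _; rewrite [alpha * lam]mulrC; exact: ler_wpM2l.
Qed.
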